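(* Let $p$ be odd, $R$ a Noetherian Banach–Tate $\mathbb{Z}_p$-algebra with multiplicative pseudo-uniformizer $\varpi$, and assume there is no $x\in R$ with $1<|x|<|\varpi|^{-1}$. Let $r\in[1/p,1)$, $t\ge1$, and let $f:\bigoplus_{i=1}^t\mathcal{D}^r\to\bigoplus_{i=1}^t\mathcal{D}^{r^{1/p}}$ be a norm-decreasing $R$-linear map, $\iota:\bigoplus_{i=1}^t\mathcal{D}^{r^{1/p}}\hookrightarrow\bigoplus_{i=1}^t\mathcal{D}^r$ the natural inclusion, and $U=\iota\circ f$ (a compact endomorphism of $M=\bigoplus_{i=1}^t\mathcal{D}^r$). Then $U(e^i_{r,\alpha})=\sum_{j,\beta}a^j_\beta e^j_{r,\beta}$ with $|a^j_\beta|\le|\varpi|^{n(r,\varpi,\beta)-n(r^{1/p},\varpi,\beta)}$ for all $j,\beta$. Moreover, defining $\lambda(0)=0$ and $\lambda(i+1)=\lambda(i)+n(r,\varpi,\lfloor i/t\rfloor)-n(r^{1/p},\varpi,\lfloor i/t\rfloor)$, the Fredholm determinant $\det(1-TU\mid M)=\sum_{n\ge0}c_nT^n\in R\{\{T\}\}$ satisfies $|c_n|\le|\varpi|^{\lambda(n)}$ for all $n$.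
   Context: A Banach–Tate $\mathbb{Z}_p$-algebra is a complete non-archimedean normed ring $R$ with a unit $\varpi$, $|\varpi|<1$, $|\varpi s|=|\varpi||s|$ for all $s$, and a ring map $\mathbb{Z}_p\to R$ with $|x|\le|x|_p$. For $s\in[1/p,1)$, $\mathcal{D}^s=\mathcal{D}^s(\mathbb{Z}_p,R)=\{\sum_{\alpha\ge0}d_\alpha\mathbf{n}^\alpha: d_\alpha\in R,\ |d_\alpha|s^\alpha\to0\}$ with norm $\sup_\alpha|d_\alpha|s^\alpha$, where $\mathbf{n}=\delta_1-1$ in the distribution algebra of $\mathbb{Z}_p$ (completion of the continuous $R$-valued distributions on $\mathbb{Z}_p$); $\mathcal{D}^{r^{1/p}}\subseteq\mathcal{D}^r$ naturally. Put $n(s,\varpi,\alpha)=\lfloor\alpha\log s/\log|\varpi|\rfloor$ and $e_{s,\alpha}=\varpi^{-n(s,\varpi,\alpha)}\mathbf{n}^\alpha$, a potential orthonormal basis of $\mathcal{D}^s$; $e^i_{s,\alpha}\in\bigoplus_{i=1}^t\mathcal{D}^s$ is $e_{s,\alpha}$ in the $i$-th summand. The basis of $M$ is ordered $e^1_{r,0},\dots,e^t_{r,0},e^1_{r,1},\dots$ (so the row indexed $i\ge0$ corresponds to $\alpha=\lfloor i/t\rfloor$). The Fredholm determinant of a compact operator on a potentially orthonormalizable Banach module is $\sum c_nT^n$ where $c_n=(-1)^n\sum$ of all principal $n\times n$ minors of the matrix of the operator in a potential orthonormal basis. *)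

(* Defs.v *)
From HB Require Import structures.
From mathcomp Require Import all_boot all_order all_algebra.
From Stdlib Require Import Reals.
Set Implicit Arguments. Unset Strict Implicit. Unset Printing Implicit Defensive.
Import GRing.Theory.
Local Open Scope ring_scope.

Definition real := Rdefinitions.R.

Definition padic_abs (p : nat) (z : int) : real :=
  if z == 0 then R0 else Rinv (pow (INR p) (logn p (absz z))).

Section Defs.
Variable A : comUnitRingType.
Variable nrm : A -> real.

Definition seq_cv (u : nat -> A) (l : A) : Prop :=
  forall eps, Rlt R0 eps -> exists N, forall n, leq N n -> Rlt (nrm (u n - l)) eps.
Definition cauchy (u : nat -> A) : Prop :=
  forall eps, Rlt R0 eps -> exists N, forall m n, leq N m -> leq N n ->
    Rlt (nrm (u m - u n)) eps.

Definition is_ideal (I : A -> Prop) : Prop :=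
  [/\ I 0, (forall x y, I x -> I y -> I (x + y)) & (forall a x, I x -> I (a * x))].
Definition noetherian : Prop :=
  forall I, is_ideal I -> exists s : seq A, (forall x, x \in s -> I x) /\
    (forall x, I x -> exists c : seq A, x = \sum_(i < size s) c`_i * s`_i).

(* Banach-Tate Z_p-algebra with multiplicative pseudo-uniformizer w.
   The structure map Z_p -> R is recorded through its restriction to Z. *)
Record banach_tate (p : nat) (w : A) : Prop := {
  bt_nonneg : forall x, Rle R0 (nrm x);
  bt_zero : forall x, nrm x = R0 <-> x = 0;
  bt_opp : forall x, nrm (- x) = nrm x;
  bt_ultra : forall x y, Rle (nrm (x + y)) (Rmax (nrm x) (nrm y));
  bt_submul : forall x y, Rle (nrm (x * y)) (Rmult (nrm x) (nrm y));
  bt_one : Rle (nrm 1) R1;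
  bt_complete : forall u, cauchy u -> exists l, seq_cv u l;
  bt_unit : w \is a GRing.unit;
  bt_lt1 : Rlt (nrm w) R1;
  bt_mult : forall s, nrm (w * s) = Rmult (nrm w) (nrm s);
  bt_Zp : forall z : int, Rle (nrm (z%:~R)) (padic_abs p z)
}.

(* Elements of (+)_{i<t} D^s, represented by their coefficients d_{i,alpha}
   in the expansion sum_alpha d_alpha n^alpha (n = delta_1 - 1). *)
Definition vec (t : nat) := 'I_t -> nat -> A.

Definition in_D (t : nat) (s : real) (x : vec t) : Prop :=
  forall i, Un_cv (fun a => Rmult (nrm (x i a)) (pow s a)) R0.

Definition norm_le (t : nat) (s : real) (x : vec t) (c : real) : Prop :=
  forall i a, Rle (Rmult (nrm (x i a)) (pow s a)) c.

Definition vadd (t : nat) (x y : vec t) : vec t := fun i a => x i a + y i a.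
Definition vscale (t : nat) (c : A) (x : vec t) : vec t := fun i a => c * x i a.

Definition nfl (s : real) (w : A) (a : nat) : Z :=
  Int_part (Rdiv (Rmult (INR a) (ln s)) (ln (nrm w))).

Definition ebasis (t : nat) (s : real) (w : A) (i : 'I_t) (a : nat) : vec t :=
  fun j b => if (j == i) && (b == a) then w ^- Z.to_nat (nfl s w a) else 0.

Definition ecoord (t : nat) (s : real) (w : A) (y : vec t) (j : 'I_t) (b : nat) : A :=
  y j b * w ^+ Z.to_nat (nfl s w b).

(* matrix of U in the ordered basis e^1_{s,0},...,e^t_{s,0},e^1_{s,1},...:
   entry (k,l) = coefficient of the k-th basis vector in U(l-th basis vector) *)
Definition mat (t : nat) (ht : leq 1 t) (s : real) (w : A) (U : vec t -> vec t)
    (k l : nat) : A :=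
  ecoord s w (U (ebasis s w (Ordinal (ltn_pmod l ht)) (l %/ t)))
        (Ordinal (ltn_pmod k ht)) (k %/ t).

Definition fred_partial (M : nat -> nat -> A) (N n : nat) : A :=
  (-1) ^+ n * \sum_(S : {set 'I_N} | #|S| == n)
     \det (\matrix_(a < #|S|, b < #|S|)
             M (nat_of_ord (enum_val a)) (nat_of_ord (enum_val b))).

End Defs.

Fixpoint lam (A : comUnitRingType) (nrm : A -> real) (t : nat) (r r' : real) (w : A)
    (i : nat) : Z :=
  match i with
  | O => 0%Z
  | S i' => (lam nrm t r r' w i' + nfl nrm r w (i' %/ t) - nfl nrm r' w (i' %/ t))%Z
  end.

(* Main.v *)
Require Import Defs.
From HB Require Import structures.
From mathcomp Require Import all_boot all_order all_algebra.
From Stdlib Require Import Reals Lra Lia.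
Set Implicit Arguments. Unset Strict Implicit. Unset Printing Implicit Defensive.
Import GRing.Theory.
Local Open Scope ring_scope.

Definition Dk (A : comUnitRingType) (M : nat -> nat -> A) n (s : seq nat) : A :=
  \det (\matrix_(a < n, b < n) M (nth 0%nat s a) (nth 0%nat s b)).

Definition Ps N (S : {set 'I_N}) : pred nat := fun k => [exists x in S, val x == k].

Lemma enum_valsE N (S : {set 'I_N}) :
  map val (enum S) = filter (Ps S) (iota 0 N).
Proof.
have -> : enum S = filter (mem S) (enum 'I_N) by rewrite enumT.
rewrite -val_enum_ord filter_map; congr map; apply: eq_filter => x /=.
apply/idP/existsP => [xS|[y /andP[yS /eqP /val_inj Hy]]]; last by rewrite -Hy.
by exists x; rewrite xS eqxx.
Qed.

Lemma fredE (A : comUnitRingType) (M : nat -> nat -> A) N n :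
  fred_partial M N n =
  (-1) ^+ n * \sum_(S : {set 'I_N} | #|S| == n) Dk M n (map val (enum S)).
Proof.
rewrite /fred_partial; congr (_ * _); apply: eq_bigr => S /eqP HS.
have -> : \matrix_(a < #|S|, b < #|S|)
    M (nat_of_ord (enum_val a)) (nat_of_ord (enum_val b)) =
  \matrix_(a < #|S|, b < #|S|)
    M (nth 0%nat (map val (enum S)) a) (nth 0%nat (map val (enum S)) b).
  apply/matrixP => a b; rewrite !mxE /enum_val.
  rewrite (nth_map (enum_default a)); last by have := ltn_ord a; move: (nat_of_ord a) => a'; rewrite cardE.
  rewrite (nth_map (enum_default b)) //; by have := ltn_ord b; move: (nat_of_ord b) => b'; rewrite cardE.
rewrite /Dk; by case: n / HS.
Qed.

Lemma sorted_nth_ge (s : seq nat) (m : nat) :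
  sorted ltn s -> all (fun x : nat => leq m x) s ->
  forall a : nat, (a < size s)%nat -> (m + a <= nth 0%nat s a)%nat.
Proof.
elim: s m => [//|x s IH] m /= Hs /andP[Hx Hall] [|a] Ha /=.
  by rewrite addn0.
rewrite -addSnnS; apply: IH => //.
  exact: path_sorted Hs.
have := order_path_min ltn_trans Hs.
apply: sub_all => y /= Hy; exact: leq_ltn_trans Hx Hy.
Qed.

Lemma enum_vals_ge N (S : {set 'I_N}) (a : nat) :
  ltn a (size (map val (enum S))) -> leq a (nth 0%nat (map val (enum S)) a).
Proof.
move=> Ha; rewrite enum_valsE in Ha *.
apply: (sorted_nth_ge (m := 0)) => //.
  apply: sorted_filter; [exact: ltn_trans | exact: iota_ltn_sorted].
by apply/allP.
Qed.

Lemma size_enum_vals N (S : {set 'I_N}) : size (map val (enum S)) = #|S|.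
Proof. by rewrite size_map -cardE. Qed.

Section Split.
Variable A : comUnitRingType.
Variable F : seq nat -> A.
Variable n N : nat.

Let wid := widen_ord (leqnSn N).
Let h (S : {set 'I_N}) : {set 'I_N.+1} := [set wid x | x in S].
Let h' (S : {set 'I_N.+1}) : {set 'I_N} := [set x | wid x \in S].

Lemma wid_inj : injective wid.
Proof. move=> x y H; apply: val_inj; exact: (congr1 val H). Qed.

Lemma h_vals S : map val (enum (h S)) = map val (enum S).
Proof.
have E : iota 0 N.+1 = iota 0 N ++ [:: N] by rewrite -addn1 iotaD.
rewrite !enum_valsE E filter_cat /=.
have -> : Ps (h S) N = false.
  apply/negbTE/existsP => -[y /andP[/imsetP[x _ ->] Hx]].
  by move: Hx => /=; rewrite (ltn_eqF (ltn_ord x)).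
rewrite cats0; apply: eq_filter => k.
apply/existsP/existsP => [[y /andP[/imsetP[x xS ->] Hx]]|[x /andP[xS Hx]]].
  by exists x; rewrite xS.
exists (wid x); rewrite mem_imset; last exact: wid_inj.
by rewrite xS.
Qed.

Lemma split_sum :
  \sum_(S : {set 'I_N.+1} | #|S| == n) F (map val (enum S)) =
  \sum_(S : {set 'I_N} | #|S| == n) F (map val (enum S)) +
  \sum_(S : {set 'I_N.+1} | (#|S| == n) && (ord_max \in S)) F (map val (enum S)).
Proof.
rewrite (bigID (fun S : {set 'I_N.+1} => ord_max \in S)) /= addrC; congr (_ + _).
rewrite (reindex_onto h h').
  apply: eq_big => [S|S _]; last by rewrite h_vals.
  rewrite card_imset; last exact: wid_inj.
  have -> : ord_max \notin h S.
    apply/imsetP => -[x _ /(congr1 val) /= /eqP Hx].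
    by move: Hx; rewrite eq_sym (ltn_eqF (ltn_ord x)).
  have -> : h' (h S) == S.
    apply/eqP/setP => x; rewrite inE mem_imset //; exact: wid_inj.
  by rewrite !andbT.
move=> S /andP[_ HS]; apply/setP => y.
case: (unliftP ord_max y) => [z ->|->]; last by rewrite (negbTE HS); apply/negbTE/imsetP => -[x _ /(congr1 val) /= /eqP Hx]; move: Hx; rewrite eq_sym (ltn_eqF (ltn_ord x)).
have -> : lift ord_max z = wid z by apply: val_inj; rewrite /= /bump leqNgt ltn_ord.
by rewrite mem_imset ?inE //; exact: wid_inj.
Qed.

End Split.

Section Bounds.
Variable A : comUnitRingType.
Variable nrm : A -> R.
Hypothesis nonneg : forall x, Rle R0 (nrm x).
Hypothesis nrm0 : nrm 0 = R0.
Hypothesis nopp : forall x, nrm (- x) = nrm x.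
Hypothesis ultra : forall x y, Rle (nrm (x + y)) (Rmax (nrm x) (nrm y)).
Hypothesis submul : forall x y, Rle (nrm (x * y)) (Rmult (nrm x) (nrm y)).
Hypothesis n1 : Rle (nrm 1) R1.

Lemma sum_bound (I : Type) (r : seq I) (P : pred I) (F : I -> A) (B : R) :
  Rle R0 B -> (forall i, P i -> Rle (nrm (F i)) B) ->
  Rle (nrm (\sum_(i <- r | P i) F i)) B.
Proof.
move=> B0 H; apply: (big_ind (fun x => Rle (nrm x) B)) => //.
  by rewrite nrm0.
move=> x y Hx Hy; apply: Rle_trans (ultra x y) _; apply Rmax_lub => //.
Qed.

Variable q : R.
Hypothesis q0 : Rle R0 q.

Lemma prod_bound (I : Type) (r : seq I) (P : pred I) (F : I -> A) (g : I -> nat) :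
  (forall i, P i -> Rle (nrm (F i)) (q ^ g i)%R) ->
  Rle (nrm (\prod_(i <- r | P i) F i)) (q ^ (\sum_(i <- r | P i) g i)%nat)%R.
Proof.
move=> H.
apply: (big_ind2 (fun x m => Rle (nrm x) (q ^ m)%R)) => //.
move=> x1 x2 y1 y2 Hx Hy; rewrite pow_add.
apply: Rle_trans (submul _ _) _; apply Rmult_le_compat => //.
Qed.

Lemma sign_bound (b : bool) : Rle (nrm ((-1) ^+ b)) R1.
Proof. by case: b => /=; rewrite ?expr1 ?expr0 ?nopp. Qed.

Lemma det_bound k (B : 'M[A]_k) (g : 'I_k -> nat) :
  (forall i j, Rle (nrm (B i j)) (q ^ g i)%R) ->
  Rle (nrm (\det B)) (q ^ (\sum_i g i)%nat)%R.
Proof.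
move=> H; rewrite /determinant; apply: sum_bound; first exact: pow_le.
move=> s _; apply: Rle_trans (submul _ _) _.
rewrite -[X in Rle _ X]Rmult_1_l; apply Rmult_le_compat => //.
  exact: sign_bound.
by apply: prod_bound => i _; apply: H.
Qed.

Hypothesis complete : forall u, cauchy nrm u -> exists l, seq_cv nrm u l.
Hypothesis qlt1 : Rlt q R1.
Hypothesis qpos : Rlt R0 q.

Lemma pow_le1 k : Rle (q ^ k) R1.
Proof.
have := pow_incr q 1 k; rewrite pow1 => H; apply: Rle_trans (H _) _; lra.
Qed.

Lemma pow_decr m k : (m <= k)%nat -> Rle (q ^ k) (q ^ m).
Proof.
move=> H; rewrite -(subnKC H) pow_add -[X in Rle _ X]Rmult_1_r.
apply Rmult_le_compat_l; first exact: pow_le.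
exact: pow_le1.
Qed.

Lemma signn_bound (n : nat) (x : A) : Rle (nrm ((-1) ^+ n * x)) (nrm x).
Proof.
apply: Rle_trans (submul _ _) _; rewrite -signr_odd.
rewrite -[X in Rle _ X]Rmult_1_l; apply Rmult_le_compat_r => //.
exact: sign_bound.
Qed.

Variable M : nat -> nat -> A.
Variable e : nat -> nat.
Hypothesis mono : forall k k', (k <= k')%nat -> (e k <= e k')%nat.
Hypothesis unb : forall K, exists N, (K <= e N)%nat.
Hypothesis Hent : forall k l, Rle (nrm (M k l)) (q ^ e k).

Lemma Dk_bound n s (g : 'I_n -> nat) :
  (forall a : 'I_n, Rle (q ^ e (nth 0%nat s a)) (q ^ g a)) ->
  Rle (nrm (Dk M n s)) (q ^ (\sum_a g a)%nat).
Proof.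
move=> H; apply: det_bound => a b; rewrite mxE.
exact: Rle_trans (Hent _ _) (H a).
Qed.

Variable n : nat.
Definition G N := \sum_(S : {set 'I_N} | #|S| == n) Dk M n (map val (enum S)).
Definition Lam := (\sum_(k < n) e k)%nat.

Lemma G_bound N : Rle (nrm (G N)) (q ^ Lam).
Proof.
apply: sum_bound; first exact: pow_le.
move=> S /eqP HS.
apply: Rle_trans (Dk_bound (g := fun a => e (nth 0%nat (map val (enum S)) a)) _) _.
  by move=> a; apply: Rle_refl.
apply: pow_decr; rewrite /Lam; apply: leq_sum => a _; apply: mono.
apply: enum_vals_ge; rewrite size_enum_vals HS; exact: ltn_ord.
Qed.

Lemma G_diff N : Rle (nrm (G N.+1 - G N)) (q ^ e N).
Proof.
rewrite /G split_sum addrC addKr.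
apply: sum_bound; first exact: pow_le.
move=> S /andP[/eqP HS HN].
set s := map val (enum S).
have Ns : N \in s by apply/mapP; exists ord_max; rewrite ?mem_enum.
have Hi : (index N s < n)%nat by rewrite -HS -size_enum_vals index_mem.
apply: Rle_trans (Dk_bound (g := fun a => if nth 0%nat s a == N then e N else 0%nat) _) _.
  move=> a; case: eqP => [->|_]; first exact: Rle_refl.
  exact: pow_le1.
apply: pow_decr; rewrite (bigD1 (Ordinal Hi)) //= nth_index // eqxx.
exact: leq_addr.
Qed.

Definition u N := fred_partial M N n.

Lemma u_diff N : Rle (nrm (u N.+1 - u N)) (q ^ e N).
Proof.
rewrite /u !fredE -mulrBr; apply: Rle_trans (signn_bound _ _) _.
exact: G_diff.
Qed.

Lemma u_tele N0 k : Rle (nrm (u (N0 + k) - u N0)) (q ^ e N0).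
Proof.
elim: k => [|k IH]; first by rewrite addn0 subrr nrm0; exact: pow_le.
have -> : u (N0 + k.+1) - u N0 = (u (N0 + k).+1 - u (N0 + k)) + (u (N0 + k) - u N0).
  by rewrite addnS addrA subrK.
apply: Rle_trans (ultra _ _) _; apply: Rmax_lub => //.
apply: Rle_trans (u_diff _) _; apply: pow_decr; apply: mono; exact: leq_addr.
Qed.

Lemma u_cauchy : cauchy nrm u.
Proof.
move=> eps Heps.
have [K HK] : exists K : nat, forall m, (m >= K)%coq_nat -> Rlt (Rabs (q ^ m)) eps.
  apply: pow_lt_1_zero => //; rewrite Rabs_right; lra.
have [N0 HN0] := unb K.
exists N0 => m m' Hm Hm'.
have -> : u m - u m' = (u m - u N0) - (u m' - u N0) by rewrite opprB addrA subrK.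
apply: Rle_lt_trans (ultra _ _) _; rewrite nopp.
have H1 : Rlt (q ^ e N0) eps.
  have := HK (e N0) (@leP _ _ HN0); rewrite Rabs_right //.
  apply: Rle_ge; exact: pow_le.
apply: Rmax_lub_lt.
  rewrite -(subnKC Hm); exact: Rle_lt_trans (u_tele _ _) H1.
rewrite -(subnKC Hm'); exact: Rle_lt_trans (u_tele _ _) H1.
Qed.

Lemma u_limit : exists c, seq_cv nrm u c /\ Rle (nrm c) (q ^ Lam).
Proof.
have [c Hc] := complete u_cauchy.
exists c; split => //.
apply: Rnot_lt_le => Hlt.
have Hq : Rlt R0 (q ^ Lam) by apply: pow_lt.
have [N HN] := Hc (Rminus (nrm c) (q ^ Lam)) ltac:(lra).
have := HN N (leqnn N) => H2.
have Hu : Rle (nrm (u N)) (q ^ Lam).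
  rewrite /u fredE; apply: Rle_trans (signn_bound _ _) _; exact: G_bound.
have : Rle (nrm c) (Rmax (nrm (u N)) (nrm (- (u N - c)))).
  have E : c = u N + - (u N - c) by rewrite opprB addrC subrK.
  rewrite [X in nrm X]E; exact: ultra.
rewrite nopp => H3.
have := Rmax_lub_lt (nrm (u N)) (nrm (u N - c)) (nrm c) ltac:(lra) ltac:(lra).
lra.
Qed.

End Bounds.

Lemma IZR_lt1 (x y : Z) : Rlt (IZR x) (IZR y + 1) -> (x <= y)%Z.
Proof. rewrite -plus_IZR => /lt_IZR; lia. Qed.

Lemma floor_facts (x : R) : Rle (IZR (Int_part x)) x /\ Rlt x (IZR (Int_part x) + 1).
Proof. have [H1 H2] := base_Int_part x; split; lra. Qed.

Lemma Int_part_nonneg x : Rle 0 x -> (0 <= Int_part x)%Z.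
Proof.
move=> Hx; have [_ H] := floor_facts x.
have : (0 <= Int_part x)%Z.
  apply: (IZR_lt1 (x := 0)); lra.
done.
Qed.

Lemma floor_diff_mono (P : nat) (z z' : R) :
  (1 <= P)%coq_nat -> Rle 0 z -> Rle z z' ->
  (Int_part (INR P * z) - Int_part z <= Int_part (INR P * z') - Int_part z')%Z.
Proof.
move=> HP Hz Hzz.
have [Ha1 Ha2] := floor_facts (INR P * z).
have [Hb1 Hb2] := floor_facts z.
have [Ha1' Ha2'] := floor_facts (INR P * z').
have [Hb1' Hb2'] := floor_facts z'.
set a := Int_part (INR P * z) in Ha1 Ha2 *.
set b := Int_part z in Hb1 Hb2 *.
set a' := Int_part (INR P * z') in Ha1' Ha2' *.
set b' := Int_part z' in Hb1' Hb2' *.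
have HP' : Rle 1 (INR P) by apply: (le_INR 1).
have Hbb : (b <= b')%Z by apply: IZR_lt1; lra.
have Haa : (a <= a')%Z by apply: IZR_lt1; nra.
have H3 : (Z.of_nat P * b' <= a')%Z.
  apply: IZR_lt1; rewrite mult_IZR -INR_IZR_INZ; nra.
have H4 : (a <= Z.of_nat P * b + Z.of_nat P - 1)%Z.
  have : (a <= Z.of_nat P * b + Z.of_nat P - 1 + 0)%Z; last lia.
  apply: IZR_lt1; rewrite plus_IZR minus_IZR plus_IZR mult_IZR -INR_IZR_INZ; nra.
have Hb0 : (0 <= b)%Z by apply: Int_part_nonneg.
nia.
Qed.

Lemma floor_diff_ge (P : nat) (z : R) :
  (2 <= P)%coq_nat -> Rle 0 z ->
  (Int_part z <= Int_part (INR P * z) - Int_part z)%Z.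
Proof.
move=> HP Hz.
have [Ha1 Ha2] := floor_facts (INR P * z).
have [Hb1 Hb2] := floor_facts z.
set a := Int_part (INR P * z) in Ha1 Ha2 *.
set b := Int_part z in Hb1 Hb2 *.
have HP' : Rle 2 (INR P) by apply: (le_INR 2).
have H3 : (Z.of_nat P * b <= a)%Z.
  apply: IZR_lt1; rewrite mult_IZR -INR_IZR_INZ; nra.
have Hb0 : (0 <= b)%Z by apply: Int_part_nonneg.
nia.
Qed.

Section Main.
Variables (p : nat) (A : comUnitRingType) (nrm : A -> R) (w : A).
Hypothesis Hp2 : (2 <= p)%coq_nat.
Hypothesis BT : banach_tate nrm p w.
Hypothesis nox : forall x : A, ~ (Rlt R1 (nrm x) /\ Rlt (nrm x) (Rinv (nrm w))).
Variables (r : R) (t : nat).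
Hypothesis Hr1 : Rle (/ INR p) r.
Hypothesis Hr2 : Rlt r R1.
Let r' := Rpower r (/ INR p).
Let q := nrm w.

Lemma nrm1 : nrm 1 = R1.
Proof.
have H0 : nrm 1 <> R0 by move/(bt_zero BT)/eqP; rewrite oner_eq0.
have H1 := bt_one BT.
have H2 := bt_submul BT 1 1; rewrite mulr1 in H2.
have H3 := bt_nonneg BT 1.
nra.
Qed.

Lemma q_pos : Rlt R0 q.
Proof.
have H := bt_nonneg BT w.
have : q <> R0.
  move/(bt_zero BT) => w0; have := bt_unit BT; by rewrite w0 unitr0.
rewrite /q; lra.
Qed.

Lemma q_lt1 : Rlt q R1.
Proof. exact: bt_lt1 BT. Qed.

Lemma nrm_wX k s : nrm (w ^+ k * s) = (q ^ k * nrm s)%R.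
Proof.
elim: k s => [|k IH] s /=; first by rewrite expr0 mul1r; lra.
by rewrite exprS -mulrA (bt_mult BT) IH /q; lra.
Qed.

Lemma nrm_wV k : nrm (w ^- k) = (/ q ^ k)%R.
Proof.
have Hu : w ^+ k \is a GRing.unit by rewrite unitrX // (bt_unit BT).
have := nrm_wX k (w ^- k); rewrite mulrV // nrm1 => H.
have Hq : (q ^ k > 0)%R by apply: pow_lt; exact: q_pos.
apply: (Rmult_eq_reg_l (q ^ k)); [rewrite -H Rinv_r; lra | lra].
Qed.

Lemma r_pos : Rlt R0 r.
Proof.
have : (0 < / INR p)%R by apply: Rinv_0_lt_compat; apply: lt_0_INR; lia.
lra.
Qed.

Lemma lq_neg : Rlt (ln q) 0.
Proof. rewrite -ln_1; apply: ln_increasing; [exact: q_pos | exact: q_lt1]. Qed.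

Lemma lr_neg : Rlt (ln r) 0.
Proof. rewrite -ln_1; apply: ln_increasing; [exact: r_pos | lra]. Qed.

Lemma r'_pos : Rlt R0 r'.
Proof. rewrite /r' /Rpower; exact: exp_pos. Qed.

Lemma lr'E : ln r' = (/ INR p * ln r)%R.
Proof. by rewrite /r' /Rpower ln_exp. Qed.

Lemma lr'_neg : Rlt (ln r') 0.
Proof.
rewrite lr'E; have : (0 < / INR p)%R by apply: Rinv_0_lt_compat; apply: lt_0_INR; lia.
have := lr_neg; nra.
Qed.

Lemma nfl_floor s b :
  let X := (INR b * ln s / ln q)%R in
  Rle (IZR (nfl nrm s w b)) X /\ Rlt X (IZR (nfl nrm s w b) + 1).
Proof. exact: floor_facts. Qed.

Lemma nfl_nonneg s b : Rlt R0 s -> Rlt s R1 -> (0 <= nfl nrm s w b)%Z.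
Proof.
move=> H1 H2; apply: Int_part_nonneg.
have Hs : Rlt (ln s) 0 by rewrite -ln_1; apply: ln_increasing.
have := lq_neg; have := pos_INR b => Hb Hq.
rewrite /Rdiv; have Hpos : (0 < / ln q * ln s)%R.
  have : (/ ln q < 0)%R by apply: Rinv_lt_0_compat.
  move=> Hi; have -> : (/ ln q * ln s = (- / ln q) * (- ln s))%R by ring.
  apply: Rmult_lt_0_compat; lra.
have Hi : (0 <= INR b * (/ ln q * ln s))%R by apply: Rmult_le_pos; lra.
rewrite Rmult_assoc (Rmult_comm (ln s)); exact: Hi.
Qed.

Lemma INR_to_nat (z : Z) : (0 <= z)%Z -> INR (Z.to_nat z) = IZR z.
Proof. by move=> Hz; rewrite INR_IZR_INZ Znat.Z2Nat.id. Qed.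

Lemma pow_le_of_ln (x y : R) : Rlt 0 x -> Rlt 0 y -> Rle (ln x) (ln y) -> Rle x y.
Proof.
move=> Hx Hy H; apply: Rnot_lt_le => Hlt.
have := ln_increasing _ _ Hy Hlt; lra.
Qed.

Lemma E_in_D (i : 'I_t) a : in_D nrm r (ebasis nrm r w i a).
Proof.
move=> j eps Heps; exists a.+1 => b Hb.
rewrite /ebasis /R_dist.
have -> : (b == a) = false by apply/eqP => Hba; move: Hb; rewrite /ge Hba; lia.
rewrite andbF.
have -> : nrm 0 = R0 by apply/(bt_zero BT).
rewrite Rmult_0_l Rminus_0_r Rabs_R0; lra.
Qed.

Lemma E_norm (i : 'I_t) a : norm_le nrm r (ebasis nrm r w i a) R1.
Proof.
move=> j b; rewrite /ebasis.
case: ((j == i) && (b == a)) / andP => [[_ /eqP ->]|_]; last first.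
  have -> : nrm 0 = R0 by apply/(bt_zero BT).
  lra.
rewrite nrm_wV.
set k := Z.to_nat _.
have Hn := nfl_nonneg (b:=a) r_pos Hr2.
have [Hf _] := nfl_floor r a.
have Hk : INR k = IZR (nfl nrm r w a) by exact: INR_to_nat.
have Hqk : (0 < q ^ k)%R by apply: pow_lt; exact: q_pos.
have Hra : (0 < r ^ a)%R by apply: pow_lt; exact: r_pos.
have Hle : Rle (r ^ a) (q ^ k).
  apply: pow_le_of_ln => //; rewrite !ln_pow; [|exact: q_pos|exact: r_pos].
  have Hlq := lq_neg.
  have E : (INR a * ln r / ln q * ln q = INR a * ln r)%R by field; lra.
  rewrite Hk; nra.
apply: (Rmult_le_reg_l (q ^ k)) => //.
rewrite -Rmult_assoc Rinv_r; lra.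
Qed.

Variable f : vec A t -> vec A t.
Hypothesis Hf : forall x, in_D nrm r x -> in_D nrm r' (f x).
Hypothesis Hnorm : forall x c, in_D nrm r x -> norm_le nrm r x c -> norm_le nrm r' (f x) c.

Lemma part1 (i : 'I_t) (a : nat) (j : 'I_t) (b : nat) :
  Rle (nrm (ecoord nrm r w (f (ebasis nrm r w i a)) j b))
      (powerRZ q (nfl nrm r w b - nfl nrm r' w b)%Z).
Proof.
set Y := f _.
have HY := Hnorm (E_in_D i a) (E_norm i a) j b.
rewrite -/Y in HY.
set k2 := Z.to_nat (nfl nrm r' w b).
have Hn2 : (0 <= nfl nrm r' w b)%Z.
  apply: nfl_nonneg; first exact: r'_pos.
  apply: (ln_lt_inv); [exact: r'_pos|lra|]; rewrite ln_1; exact: lr'_neg.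
have Hn1 : (0 <= nfl nrm r w b)%Z by apply: nfl_nonneg; [exact: r_pos|].
have Hq := q_pos.
have Hqk : (0 < q ^ k2)%R by apply: pow_lt.
have HYb : Rle (nrm (Y j b)) (/ q ^ k2).
  apply: Rnot_lt_le => Hlt.
  apply: (nox (x := Y j b * w ^+ k2)); rewrite mulrC nrm_wX.
  have H1 : (1 < q ^ k2 * nrm (Y j b))%R.
    have := Rmult_lt_compat_l _ _ _ Hqk Hlt; rewrite Rinv_r; lra.
  split; first lra.
  have Hr'b : (0 < r' ^ b)%R by apply: pow_lt; exact: r'_pos.
  have Hlt2 : Rlt (q ^ k2.+1) (r' ^ b).
    apply: ln_lt_inv; [exact: pow_lt|done|].
    rewrite !ln_pow //; last exact: r'_pos.
    have [_ Hf2] := nfl_floor r' b.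
    have Hk : INR k2.+1 = (IZR (nfl nrm r' w b) + 1)%R by rewrite S_INR INR_to_nat.
    have Hlq := lq_neg.
    have E : (INR b * ln r' / ln q * ln q = INR b * ln r')%R by field; lra.
    rewrite Hk; nra.
  have Hnn := bt_nonneg BT (Y j b).
  have H3 : (q ^ k2.+1 * nrm (Y j b) < 1)%R.
    have : (nrm (Y j b) * q ^ k2.+1 < nrm (Y j b) * r' ^ b)%R.
      apply: Rmult_lt_compat_l => //.
      have := Rinv_0_lt_compat _ Hqk; lra.
    rewrite -/r'; lra.
  rewrite /= in H3.
  apply: (Rmult_lt_reg_l q) => //; rewrite Rinv_r; lra.
rewrite /ecoord mulrC nrm_wX.
have -> : (nfl nrm r w b - nfl nrm r' w b)%Z =
   (Z.of_nat (Z.to_nat (nfl nrm r w b)) + - Z.of_nat k2)%Z by rewrite /k2 !Znat.Z2Nat.id; lia.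
rewrite powerRZ_add; last lra.
rewrite powerRZ_neg' -!pow_powerRZ.
apply: Rmult_le_compat_l => //; apply: pow_le; lra.
Qed.


Definition zz b := (INR b * ln r' / ln q)%R.

Lemma c_pos : Rlt 0 (ln r' / ln q).
Proof.
have H1 := lr'_neg; have H2 := lq_neg.
have : (/ ln q < 0)%R by apply: Rinv_lt_0_compat.
move=> Hi; rewrite /Rdiv; have -> : (ln r' * / ln q = (- ln r') * (- / ln q))%R by ring.
apply: Rmult_lt_0_compat; lra.
Qed.

Lemma zzE b : zz b = (INR b * (ln r' / ln q))%R.
Proof. by rewrite /zz /Rdiv Rmult_assoc. Qed.

Lemma nflrE b : nfl nrm r w b = Int_part (INR p * zz b).
Proof.
rewrite /nfl; congr Int_part; rewrite /zz lr'E.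
have := lq_neg; have : INR p <> 0%R by apply: not_0_INR; lia.
rewrite /q => H1 H2; field; split; lra.
Qed.

Lemma zz_nonneg b : Rle 0 (zz b).
Proof. rewrite zzE; apply: Rmult_le_pos; [exact: pos_INR | have := c_pos; lra]. Qed.

Lemma zz_mono b b' : (b <= b')%nat -> Rle (zz b) (zz b').
Proof.
move=> H; rewrite !zzE; apply: Rmult_le_compat_r; first by have := c_pos; lra.
by apply: le_INR; apply/leP.
Qed.

Definition Ediff b := (nfl nrm r w b - nfl nrm r' w b)%Z.

Lemma Ediff_ge b : (Int_part (zz b) <= Ediff b)%Z.
Proof. rewrite /Ediff nflrE; exact: floor_diff_ge (zz_nonneg b). Qed.

Lemma Ediff_nonneg b : (0 <= Ediff b)%Z.
Proof. have := @Ediff_ge b; have := Int_part_nonneg (zz_nonneg b); lia. Qed.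

Lemma Ediff_mono b b' : (b <= b')%nat -> (Ediff b <= Ediff b')%Z.
Proof.
move=> H; rewrite /Ediff !nflrE.
apply: floor_diff_mono; [lia | exact: zz_nonneg | exact: zz_mono].
Qed.

Lemma Ediff_unb K : exists b, (Z.of_nat K <= Ediff b)%Z.
Proof.
have [b Hb] := INR_archimed (ln r' / ln q) (INR K + 1) c_pos.
exists b; apply: (Z.le_trans _ _ _ _ (@Ediff_ge b)).
have [_ H2] := floor_facts (zz b).
apply: IZR_lt1; rewrite -INR_IZR_INZ; rewrite zzE in H2 *; lra.
Qed.

Variable ht : (1 <= t)%nat.

Definition e k := Z.to_nat (Ediff (k %/ t)).

Lemma e_mono k k' : (k <= k')%nat -> (e k <= e k')%nat.
Proof.
move=> H; rewrite /e; apply/leP.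
have := Ediff_mono (leq_div2r t H); lia.
Qed.

Lemma e_unb K : exists N, (K <= e N)%nat.
Proof.
have [b Hb] := Ediff_unb K.
exists (b * t)%nat; rewrite /e mulnK //; apply/leP; lia.
Qed.

Lemma Hent k l : Rle (nrm (mat nrm ht r w f k l)) (q ^ e k).
Proof.
rewrite /mat; apply: Rle_trans (part1 _ _ _ _) _.
rewrite /e pow_powerRZ Znat.Z2Nat.id; last exact: Ediff_nonneg.
exact: Rle_refl.
Qed.

Lemma lamE n : lam nrm t r r' w n = Z.of_nat (Lam e n).
Proof.
elim: n => [|n IH]; first by rewrite /Lam big_ord0.
rewrite /Lam big_ord_recr /= -/(Lam e n) IH Znat.Nat2Z.inj_add /e Znat.Z2Nat.id;
  last exact: Ediff_nonneg.
rewrite /Ediff; lia.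
Qed.

End Main.

Unset Implicit Arguments.

Theorem mainTheorem14
  (p : nat) (A : comUnitRingType) (nrm : A -> real) (w : A) :
  prime p -> odd p ->
  banach_tate nrm p w -> noetherian A ->
  (forall x : A, ~ (Rlt R1 (nrm x) /\ Rlt (nrm x) (Rinv (nrm w)))) ->
  forall (r : real) (t : nat) (ht : leq 1 t),
  Rle (Rinv (INR p)) r -> Rlt r R1 ->
  let r' := Rpower r (Rinv (INR p)) in
  forall f : vec A t -> vec A t,
  (forall x, in_D nrm r x -> in_D nrm r' (f x)) ->
  (forall x y, in_D nrm r x -> in_D nrm r y -> f (vadd x y) = vadd (f x) (f y)) ->
  (forall (c : A) x, in_D nrm r x -> f (vscale c x) = vscale c (f x)) ->
  (forall x c, in_D nrm r x -> norm_le nrm r x c -> norm_le nrm r' (f x) c) ->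
  let U := f in
  (forall (i : 'I_t) (a : nat) (j : 'I_t) (b : nat),
      Rle (nrm (ecoord nrm r w (U (ebasis nrm r w i a)) j b))
          (powerRZ (nrm w) (nfl nrm r w b - nfl nrm r' w b)%Z)) /\
  (forall n : nat, exists c : A,
      seq_cv nrm (fun N => fred_partial (mat nrm ht r w U) N n) c /\
      Rle (nrm c) (powerRZ (nrm w) (lam nrm t r r' w n))).
Proof.
move=> Hpr _ BT _ nox r t ht Hr1 Hr2 r' f Hf _ _ Hnorm U.
have Hp2 : (2 <= p)%coq_nat by apply/leP; exact: prime_gt1.
split.
  move=> i a j b; exact: (part1 Hp2 BT nox Hr1 Hr2 Hnorm i a j b).
move=> n.
have nrm0 : nrm 0 = R0 by apply/(bt_zero BT).
have [c [Hc Hb]] := u_limit (bt_nonneg BT) nrm0 (bt_opp BT) (bt_ultra BT)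
  (bt_submul BT) (bt_one BT) (Rlt_le _ _ (q_pos BT)) (bt_complete BT)
  (q_lt1 BT) (q_pos BT)
  (e_mono Hp2 BT t Hr1 Hr2) (e_unb Hp2 BT Hr1 Hr2 ht)
  (Hent Hp2 BT nox Hr1 Hr2 Hnorm ht) n.
exists c; split; first exact: Hc.
rewrite (lamE Hp2 BT t Hr1 Hr2) -pow_powerRZ; exact: Hb.
Qed.
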